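(* Let $d,l\in\mathbb{N}$, let $\gamma\colon[0,1]\to(0,1)^d$ be the length parameterisation of a line segment, let $\mathcal{P}$ be a dense subset of $\operatorname{Lip}_1([0,1],\mathbb{R})$, $t_0\in(0,1)$, let $f=(f_1,\ldots,f_l)\in\operatorname{Lip}_1([0,1]^d,\mathbb{R}^l)$ with $\operatorname{Lip}(f)<1$, $\varepsilon\in(0,1)$ and $j\in\{1,\ldots,l\}$. Then there exist $p\in\mathcal{P}$, $\eta>0$ and $g=(g_1,\ldots,g_l)\in\operatorname{Lip}_1([0,1]^d,\mathbb{R}^l)$ such that: (i) $\|g(x)-f(x)\|\leq\varepsilon$ for all $x\in[0,1]^d$; (ii) $g_j(\gamma(t))=p(t)$ for all $t\in(t_0-\eta,t_0+\eta)\cap[0,1]$; (iii) if $l=1$, then $g_1\circ\gamma=p$ on $[0,1]$.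
   Context: $\operatorname{Lip}_1([0,1]^d,\mathbb{R}^l)$ is the space of mappings $[0,1]^d\to\mathbb{R}^l$ with Lipschitz constant at most $1$, with the supremum metric. A length parameterisation of a line segment is a map $\gamma(t)=a+tv$ with $\|v\|=1$. *)

(* Defs.v *)
From mathcomp Require Import all_boot all_order all_algebra.
From mathcomp Require Import reals.
Set Implicit Arguments. Unset Strict Implicit. Unset Printing Implicit Defensive.
Import Order.TTheory GRing.Theory Num.Theory.
Local Open Scope ring_scope.

Definition enorm (R : realType) (n : nat) (x : 'I_n -> R) : R :=
  Num.sqrt (\sum_(i < n) x i ^+ 2).

Definition vsub (R : realType) (n : nat) (x y : 'I_n -> R) : 'I_n -> R :=
  fun i => x i - y i.

Definition in_cube (R : realType) (d : nat) (x : 'I_d -> R) : Prop :=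
  forall i, 0 <= x i <= 1.
Definition in_open_cube (R : realType) (d : nat) (x : 'I_d -> R) : Prop :=
  forall i, 0 < x i < 1.

Definition lipschitz_cube (R : realType) (d l : nat)
    (L : R) (f : ('I_d -> R) -> ('I_l -> R)) : Prop :=
  forall x y, in_cube x -> in_cube y ->
    enorm (vsub (f x) (f y)) <= L * enorm (vsub x y).

Definition Lip1_cube (R : realType) (d l : nat) (f : ('I_d -> R) -> ('I_l -> R)) :=
  lipschitz_cube 1 f.

Definition Lip_lt1_cube (R : realType) (d l : nat) (f : ('I_d -> R) -> ('I_l -> R)) :=
  exists L : R, L < 1 /\ lipschitz_cube L f.

(* p ∈ Lip_1([0,1], R)  (only the values on [0,1] matter) *)
Definition Lip1_unit (R : realType) (p : R -> R) : Prop :=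
  forall s t, 0 <= s <= 1 -> 0 <= t <= 1 -> `|p s - p t| <= `|s - t|.

Definition dense_Lip1_unit (R : realType) (P : (R -> R) -> Prop) : Prop :=
  (forall p, P p -> Lip1_unit p) /\
  (forall q, Lip1_unit q -> forall e : R, 0 < e ->
     exists p, P p /\ forall t, 0 <= t <= 1 -> `|p t - q t| <= e).

Definition segment_param (R : realType) (d : nat) (gamma : R -> 'I_d -> R) : Prop :=
  (exists (a v : 'I_d -> R), enorm v = 1 /\ forall t i, gamma t i = a i + t * v i) /\
  (forall t, 0 <= t <= 1 -> in_open_cube (gamma t)).

(* Main.v *)
Require Import Defs.
From mathcomp Require Import all_boot all_order all_algebra.
From mathcomp Require Import reals.
Import Order.TTheory GRing.Theory Num.Theory.
Local Open Scope ring_scope.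
From mathcomp Require Import ring lra.
From Stdlib Require Import FunctionalExtensionality.
Set Implicit Arguments. Unset Strict Implicit. Unset Printing Implicit Defensive.

Section S.
Variable R : realType.

Definition clampI (lo hi y : R) : R := if y < lo then lo else if hi < y then hi else y.

Lemma clamp_between (lo lo' w y y' : R) : 0 <= w ->
  let d := clampI lo (lo + w) y - clampI lo' (lo' + w) y' in
  (lo - lo' <= d <= y - y') \/ (y - y' <= d <= lo - lo').
Proof.
move=> w0 /=; rewrite /clampI.
case: (ltrP y lo) => h1; case: (ltrP (lo + w) y) => h2;
case: (ltrP y' lo') => h3; case: (ltrP (lo' + w) y') => h4;
  (have : y - y' <= lo - lo' \/ lo - lo' <= y - y' by lra); move=> [] h5;
  first [ by left; lra | by right; lra ].
Qed.

Lemma between_sq (a b d : R) : (a <= d <= b) \/ (b <= d <= a) -> d ^+ 2 <= a ^+ 2 \/ d ^+ 2 <= b ^+ 2.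
Proof.
move=> H.
have [ha|ha] := lerP 0 d.
- case: H => /andP[h1 h2]; [right|left]; nra.
- case: H => /andP[h1 h2]; [left|right]; nra.
Qed.

Lemma clamp_fix (lo hi y : R) : lo <= y <= hi -> clampI lo hi y = y.
Proof. move=> /andP[h1 h2]; rewrite /clampI; case: ltrP => ?; first lra; case: ltrP => ?; lra. Qed.

Lemma clamp_in (lo hi y : R) : lo <= hi -> lo <= clampI lo hi y <= hi.
Proof. move=> h; rewrite /clampI; case: ltrP => ?; first lra; case: ltrP => ?; lra. Qed.

Lemma clamp_mono (lo hi y y' : R) : lo <= hi ->
  let d := clampI lo hi y - clampI lo hi y' in
  d ^+ 2 <= d * (y - y') /\ d ^+ 2 <= (y - y') ^+ 2.
Proof.
move=> h /=; rewrite /clampI.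
case: (ltrP y lo) => h1; case: (ltrP hi y) => h2;
case: (ltrP y' lo) => h3; case: (ltrP hi y') => h4; split; try nra; rewrite subrr expr2 mul0r; exact: sqr_ge0.
Qed.

Lemma clamp_near (lo hi y x : R) : lo <= x <= hi -> (clampI lo hi y - x) ^+ 2 <= (y - x) ^+ 2.
Proof.
move=> /andP[h1 h2]; rewrite /clampI.
case: (ltrP y lo) => ?; first nra; case: (ltrP hi y) => ?; nra.
Qed.

Definition sq n (x : 'I_n -> R) := \sum_(i < n) x i ^+ 2.

Lemma sq_ge0 n (x : 'I_n -> R) : 0 <= sq x.
Proof. by apply: sumr_ge0 => i _; exact: sqr_ge0. Qed.

Lemma lip_sq d l (f : ('I_d -> R) -> ('I_l -> R)) x y :
  Lip1_cube f -> in_cube x -> in_cube y -> sq (vsub (f x) (f y)) <= sq (vsub x y).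
Proof.
move=> H hx hy; have := H x y hx hy; rewrite /enorm mul1r ler_sqrt //; exact: sq_ge0.
Qed.

Lemma expand n (u v : 'I_n -> R) c : \sum_i v i ^+ 2 = 1 ->
  \sum_i (u i - c * v i) ^+ 2 = sq u - 2 * c * (\sum_i u i * v i) + c ^+ 2.
Proof.
move=> hv.
have -> : \sum_i (u i - c * v i) ^+ 2 =
   \sum_i (u i ^+ 2 - (2 * c) * (u i * v i) + c ^+ 2 * v i ^+ 2).
  by apply: eq_bigr => i _; ring.
by rewrite big_split sumrB /= -!mulr_sumr hv mulr1.
Qed.

Section G.
Variables (d l : nat) (f : ('I_d -> R) -> ('I_l -> R)) (j : 'I_l)
  (Phi : ('I_d -> R) -> ('I_d -> R)) (beta : ('I_d -> R) -> R) (e : R).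

Definition gdef x : 'I_l -> R := fun i =>
  if i == j then clampI (f (Phi x) j - e) (f (Phi x) j - e + 2 * e) (beta x)
  else f (Phi x) i.

Lemma sq_split (u : 'I_l -> R) : sq u = \sum_(i < l | i != j) u i ^+ 2 + u j ^+ 2.
Proof. by rewrite /sq (bigD1 j) //= addrC. Qed.

Lemma g_lip : Lip1_cube f -> 0 <= e -> (forall x, in_cube x -> in_cube (Phi x)) ->
  (forall x y, in_cube x -> in_cube y -> sq (vsub (Phi x) (Phi y)) <= sq (vsub x y)) ->
  (forall x y, in_cube x -> in_cube y ->
     \sum_(i < l | i != j) (f (Phi x) i - f (Phi y) i) ^+ 2 + (beta x - beta y) ^+ 2
       <= sq (vsub x y)) ->
  Lip1_cube gdef.
Proof.
move=> hf e0 hc hP hA x y hx hy.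
rewrite /enorm mul1r ler_sqrt; last exact: sq_ge0.
rewrite -/(sq _) sq_split.
have -> : \sum_(i < l | i != j) vsub (gdef x) (gdef y) i ^+ 2 =
          \sum_(i < l | i != j) (f (Phi x) i - f (Phi y) i) ^+ 2.
  by apply: eq_bigr => i hi; rewrite /vsub /gdef (negbTE hi).
rewrite /vsub /gdef eqxx.
have e2 : 0 <= 2 * e by lra.
case: (between_sq (clamp_between (f (Phi x) j - e) (f (Phi y) j - e) (beta x) (beta y) e2)) => h.
- apply: (le_trans _ (hP _ _ hx hy)); apply: (le_trans _ (lip_sq hf (hc _ hx) (hc _ hy))).
  rewrite sq_split /vsub.
  move: h; have -> : f (Phi x) j - e - (f (Phi y) j - e) = f (Phi x) j - f (Phi y) j by ring.
  by rewrite lerD2l.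
- by apply: (le_trans _ (hA _ _ hx hy)); rewrite lerD2l.
Qed.

Lemma g_close x : Lip1_cube f -> 0 <= e -> in_cube x -> in_cube (Phi x) ->
  enorm (vsub (gdef x) (f x)) <= enorm (vsub (Phi x) x) + e.
Proof.
move=> hf e0 hx hPx.
have hfx : enorm (vsub (f (Phi x)) (f x)) <= enorm (vsub (Phi x) x).
  by have := hf _ _ hPx hx; rewrite mul1r.
apply: (le_trans _ (_ : enorm (vsub (f (Phi x)) (f x)) + e <= _)); last by rewrite lerD2r.
set D := enorm (vsub (f (Phi x)) (f x)).
have D0 : 0 <= D by exact: sqrtr_ge0.
have hD : D ^+ 2 = sq (vsub (f (Phi x)) (f x)).
  by rewrite /D /enorm sqr_sqrtr //; apply: sumr_ge0 => i _; exact: sqr_ge0.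
move: hD; rewrite sq_split /vsub => hD.
rewrite /enorm -(ger0_norm (_ : 0 <= D + e)); last lra.
rewrite -sqrtr_sqr ler_sqrt; last exact: sqr_ge0.
rewrite -/(sq _) sq_split.
have -> : \sum_(i < l | i != j) vsub (gdef x) (f x) i ^+ 2 =
          \sum_(i < l | i != j) (f (Phi x) i - f x i) ^+ 2.
  by apply: eq_bigr => i hi; rewrite /vsub /gdef (negbTE hi).
rewrite /vsub /gdef eqxx.
have e2 : f (Phi x) j - e <= f (Phi x) j - e + 2 * e by lra.
have := clamp_in (beta x) e2.
set c := clampI _ _ _ => /andP[c1 c2].
set S := \sum_(i < l | i != j) _ in hD *.
have S0 : 0 <= S by apply: sumr_ge0 => i _; exact: sqr_ge0.
set a := f (Phi x) j - f x j in hD *.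
have ha1 : a <= D by nra.
have ha2 : - D <= a by nra.
have -> : c - f x j = a + (c - f (Phi x) j) by rewrite /a; ring.
nra.
Qed.
End G.
End S.

Lemma abs_sq (R : realType) (u w : R) : (`|u| <= `|w|) = (u ^+ 2 <= w ^+ 2).
Proof. by rewrite -!sqrtr_sqr ler_sqrt // sqr_ge0. Qed.

Theorem lemma6p2 (R : realType) (d l : nat) (gamma : R -> 'I_d -> R)
  (P : (R -> R) -> Prop) (t0 : R) (f : ('I_d -> R) -> ('I_l -> R))
  (eps : R) (j : 'I_l) :
  segment_param gamma ->
  dense_Lip1_unit P ->
  0 < t0 < 1 ->
  Lip1_cube f ->
  Lip_lt1_cube f ->
  0 < eps < 1 ->
  exists (p : R -> R) (eta : R) (g : ('I_d -> R) -> ('I_l -> R)),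
    [/\ P p /\ 0 < eta, Lip1_cube g,
        (forall x, in_cube x -> enorm (vsub (g x) (f x)) <= eps),
        (forall t, t0 - eta < t < t0 + eta -> 0 <= t <= 1 -> g (gamma t) j = p t)
      & (l = 1%N -> forall t, 0 <= t <= 1 -> g (gamma t) j = p t)].
Proof.
move=> [[a [v [hv hg]]] hgin] [hPL hPd] /andP[t00 t01] hf _ /andP[e0 e1].
have hv2 : \sum_i v i ^+ 2 = 1.
  have := sqr_sqrtr (sq_ge0 v); rewrite /sq; move: hv; rewrite /enorm => ->.
  by rewrite expr1n.
pose x0 := gamma t0.
pose s (x : 'I_d -> R) := \sum_i (x i - x0 i) * v i.
have hs_seg : forall t, s (gamma t) = t - t0.
  move=> t; rewrite /s /x0.
  rewrite (eq_bigr (fun i => (t - t0) * v i ^+ 2)); last by move=> i _; rewrite !hg; ring.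
  by rewrite -mulr_sumr hv2 mulr1.
have hs_diff : forall x y, s x - s y = \sum_i vsub x y i * v i.
  by move=> x y; rewrite /s -sumrB; apply: eq_bigr => i _; rewrite /vsub; ring.
have hgc : forall t, 0 <= t <= 1 -> in_cube (gamma t).
  by move=> t ht i; have := hgin t ht i => /andP[h1 h2]; apply/andP; split; lra.
have hx0 : in_open_cube x0 by apply: hgin; apply/andP; split; lra.
have [l1|l1] := eqVneq l 1%N; last first.
-
  pose e := eps / 2.
  have e0' : 0 < e by rewrite /e; lra.
  have hq : Lip1_unit (fun _ : R => f x0 j).
    by move=> s1 t1 _ _; rewrite subrr normr0 normr_ge0.
  have [p [Pp hp]] := hPd _ hq e e0'.
  have hpL := hPL p Pp.
  pose c := t0 * (1 - t0).
  have c0 : 0 < c by rewrite /c; nra.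
  have c1 : c <= t0 by rewrite /c; nra.
  have c2 : c <= 1 - t0 by rewrite /c; nra.
  pose eta := eps / 2 * c.
  have et0 : 0 < eta by rewrite /eta; apply: mulr_gt0; lra.
  have et1 : eta <= eps / 2 by rewrite /eta; nra.
  have et2 : eta <= t0 by rewrite /eta; nra.
  have et3 : eta <= 1 - t0 by rewrite /eta; nra.
  pose sig y := clampI (- eta) eta y.
  have sigb : forall y, - eta <= sig y <= eta by move=> y; apply: clamp_in; lra.
  pose Phi (x : 'I_d -> R) : 'I_d -> R := fun i => clampI 0 1 (x i - sig (s x) * v i).
  pose beta (x : 'I_d -> R) := p (t0 + sig (s x)).
  have hc : forall x, in_cube x -> in_cube (Phi x).
    by move=> x _ i; apply: clamp_in; lra.
  have K : forall x y, in_cube x -> in_cube y ->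
      sq (vsub (Phi x) (Phi y)) <= sq (vsub x y)
        - 2 * (sig (s x) - sig (s y)) * (s x - s y) + (sig (s x) - sig (s y)) ^+ 2.
    move=> x y hx hy.
    rewrite hs_diff -expand //.
    apply: ler_sum => i _; rewrite /vsub /Phi.
    have := (clamp_mono (x i - sig (s x) * v i) (y i - sig (s y) * v i) ler01).2.
    congr (_ <= _); ring.
  have sigm : forall x y, (sig (s x) - sig (s y)) ^+ 2 <= (sig (s x) - sig (s y)) * (s x - s y).
    by move=> x y; apply: (clamp_mono _ _ _).1; lra.
  exists p, eta, (gdef f j Phi beta e); split.
  + by split.
  + apply: g_lip => //; first lra.
    * move=> x y hx hy; have := K x y hx hy; have := sigm x y; move: (sig (s x) - sig (s y)) (s x - s y) (sq (vsub (Phi x) (Phi y))) (sq (vsub x y)) => A B C D; nra.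
    * move=> x y hx hy.
      have h1 : \sum_(i < l | i != j) (f (Phi x) i - f (Phi y) i) ^+ 2
                  <= sq (vsub (Phi x) (Phi y)).
        apply: le_trans (lip_sq hf (hc _ hx) (hc _ hy)).
        by rewrite (sq_split j) lerDl sqr_ge0.
      have h2 : (beta x - beta y) ^+ 2 <= (sig (s x) - sig (s y)) ^+ 2.
        rewrite -abs_sq /beta.
        have := sigb (s x); have := sigb (s y) => /andP[a1 a2] /andP[b1 b2].
        have := hpL (t0 + sig (s x)) (t0 + sig (s y)).
        have -> : t0 + sig (s x) - (t0 + sig (s y)) = sig (s x) - sig (s y) by ring.
        by apply; apply/andP; split; lra.
      have := K x y hx hy; have := sigm x y; nra.
  + move=> x hx.
    apply: (le_trans (g_close j beta hf (ltW e0') hx (hc _ hx))).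
    have : enorm (vsub (Phi x) x) <= eta.
      rewrite /enorm -(ger0_norm (ltW et0)) -sqrtr_sqr ler_sqrt ?sqr_ge0 //.
      apply: (@le_trans _ _ (\sum_i (sig (s x) * v i) ^+ 2)).
        apply: ler_sum => i _; rewrite /vsub /Phi.
        have := clamp_near (x i - sig (s x) * v i) (hx i).
        by congr (_ <= _); ring.
      rewrite (eq_bigr (fun i => sig (s x) ^+ 2 * v i ^+ 2)); last by move=> i _; ring.
      rewrite -mulr_sumr hv2 mulr1 -abs_sq; have := sigb (s x).
      rewrite (ger0_norm (ltW et0)).
      by rewrite ler_norml.
    rewrite /e; lra.
  + move=> t /andP[ht1 ht2] ht.
    have hsig : sig (t - t0) = t - t0 by apply: clamp_fix; apply/andP; split; lra.
    have hPhi : Phi (gamma t) = x0.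
      apply: functional_extensionality => i.
      rewrite /Phi hs_seg hsig.
      have -> : gamma t i - (t - t0) * v i = x0 i by rewrite /x0 !hg; ring.
      by rewrite clamp_fix //; have := hx0 i => /andP[? ?]; apply/andP; split; lra.
    rewrite /gdef eqxx hPhi /beta hs_seg hsig.
    have -> : t0 + (t - t0) = t by ring.
    rewrite clamp_fix //.
    by have := hp t ht; rewrite ler_norml => /andP[? ?]; apply/andP; split; lra.
  + by move=> h; rewrite h eqxx in l1.
-
  subst l.
  have hq : Lip1_unit (fun t => f (gamma t) j).
    move=> s1 t1 hs1 ht1; rewrite abs_sq.
    apply: le_trans (_ : sq (vsub (f (gamma s1)) (f (gamma t1))) <= _).
      by rewrite (sq_split j) lerDr; apply: sumr_ge0 => i _; exact: sqr_ge0.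
    apply: le_trans (lip_sq hf (hgc _ hs1) (hgc _ ht1)) _.
    rewrite /sq (eq_bigr (fun i => (s1 - t1) ^+ 2 * v i ^+ 2)); last by move=> i _; rewrite /vsub !hg; ring.
    by rewrite -mulr_sumr hv2 mulr1.
  have [p [Pp hp]] := hPd _ hq eps e0.
  have hpL := hPL p Pp.
  pose Phi (x : 'I_d -> R) := x.
  pose beta (x : 'I_d -> R) := p (clampI 0 1 (t0 + s x)).
  have hv1 : forall t, 0 <= t <= 1 -> gdef f j Phi beta eps (gamma t) j = p t.
    move=> t ht; rewrite /gdef eqxx /beta hs_seg.
    have -> : t0 + (t - t0) = t by ring.
    rewrite clamp_fix // clamp_fix //.
    by have := hp t ht; rewrite ler_norml => /andP[? ?]; apply/andP; split; lra.
  exists p, 1, (gdef f j Phi beta eps); split.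
  + by split.
  + apply: g_lip => //; first lra.
    move=> x y hx hy.
    rewrite big_pred0; last by move=> i /=; rewrite [i]ord1 [j]ord1 eqxx.
    rewrite add0r.
    have h1 : (beta x - beta y) ^+ 2 <= (s x - s y) ^+ 2.
      apply: le_trans (_ : (clampI 0 1 (t0 + s x) - clampI 0 1 (t0 + s y)) ^+ 2 <= _).
        rewrite -abs_sq; apply: hpL; apply: clamp_in; lra.
      have := (clamp_mono (t0 + s x) (t0 + s y) ler01).2.
      by have -> : t0 + s x - (t0 + s y) = s x - s y by ring.
    apply: le_trans h1 _.
    have := expand (vsub x y) (s x - s y) hv2.
    rewrite -hs_diff => hE.
    have : 0 <= \sum_i (vsub x y i - (s x - s y) * v i) ^+ 2.
      by apply: sumr_ge0 => i _; exact: sqr_ge0.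
    rewrite hE; nra.
  + move=> x hx.
    apply: (le_trans (g_close j beta hf (ltW e0) hx hx)).
    rewrite /enorm /vsub /Phi (eq_bigr (fun _ => 0)); last by move=> i _; rewrite subrr expr2 mulr0.
    by rewrite big1 // sqrtr0 add0r.
  + by move=> t _ ht; apply: hv1.
  + by move=> _ t ht; apply: hv1.
Qed.
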